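(* Let $\Gamma$ be a countably infinite group, $n\in\mathbb N$, and $f=M-g\in M_n(\mathbb Z\Gamma)$ with $M=\mathrm{diag}(M_1,\dots,M_n)$ for positive integers $M_k$, $M_k>\sum_{m\in[n]}\|g^{(mk)}\|_1$ for every $k\in[n]$, and suppose there is a subsemigroup $P\subseteq\Gamma\setminus\{e_\Gamma\}$ containing $\mathrm{supp}(g^{(mk)})$ for all $m,k\in[n]$. Let $h\in(\mathbb Z\Gamma)^n\setminus(\mathbb Z\Gamma)^nf$. Then there exist $(s,k)\in\Gamma\times[n]$ and an integer $1\le j\le M_k-1$ such that $(hf^{-1})_{s,k}-j/M_k\in\mathbb Z$.
   Context: $\mathbb Z\Gamma$ is the integral group ring (finitely supported $\mathbb Z$-valued functions on $\Gamma$ with convolution $(fg)_t=\sum_sf_{ts^{-1}}g_s$); $\ell^1_{\mathbb R}(\Gamma)$ likewise. Under the hypotheses $f$ is invertible in $M_n(\ell^1_{\mathbb R}(\Gamma))$. $h\in(\mathbb Z\Gamma)^n$ is a row vector, $(hF)_m=\sum_kh_kF^{(km)}$, and $(hf^{-1})_{s,k}$ denotes the value at $s$ of the $k$-th entry of $hf^{-1}\in(\ell^1_{\mathbb R}(\Gamma))^n$; $(\mathbb Z\Gamma)^nf=\{af: a\in(\mathbb Z\Gamma)^n\}$. *)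

(* Defs.v *)
From HB Require Import structures.
From mathcomp Require Import all_boot all_order all_algebra.
From mathcomp Require Import all_classical all_reals.
From mathcomp Require Import esum.
Set Implicit Arguments. Unset Strict Implicit. Unset Printing Implicit Defensive.
Import Order.TTheory GRing.Theory Num.Theory.
Local Open Scope classical_set_scope.
Local Open Scope ring_scope.

Definition zsupp (G : groupType) (a : G -> int) : set G := [set s | a s != 0].

Definition in_ZG (G : groupType) (a : G -> int) : Prop := finite_set (zsupp a).

Definition l1norm_ZG (G : groupType) (a : G -> int) : int :=
  \sum_(s \in [set: G]) `|a s|.

Definition in_l1 (R : realType) (G : groupType) (F : G -> R) : Prop :=
  summable [set: G] (fun s => (F s)%:E).

(* Whenever one factor is in
   Z Gamma and the other in l^1, only finitely many terms are nonzero, so the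
   finitely-supported sum \sum_(s \in setT) of fsbigop is the genuine sum. *)
Definition conv_ZR (R : realType) (G : groupType) (a : G -> int) (F : G -> R)
  : G -> R := fun t => \sum_(s \in [set: G]) (a (monoid.mul t (monoid.inv s)))%:~R * F s.
Definition conv_RZ (R : realType) (G : groupType) (F : G -> R) (a : G -> int)
  : G -> R := fun t => \sum_(s \in [set: G]) F (monoid.mul t (monoid.inv s)) * (a s)%:~R.
Definition conv_ZZ (G : groupType) (a b : G -> int) : G -> int :=
  fun t => \sum_(s \in [set: G]) a (monoid.mul t (monoid.inv s)) * b s.

Definition deltaZ (G : groupType) : G -> int := fun t => (t == monoid.one)%:R.

Definition fmat (G : groupType) (n : nat) (M : 'I_n -> nat)
  (g : 'I_n -> 'I_n -> G -> int) : 'I_n -> 'I_n -> G -> int :=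
  fun m k t => ((m == k)%:R * (M k)%:R * deltaZ t) - g m k t.

Definition matmul_ZR (R : realType) (G : groupType) (n : nat)
  (A : 'I_n -> 'I_n -> G -> int) (F : 'I_n -> 'I_n -> G -> R) :
  'I_n -> 'I_n -> G -> R :=
  fun m k t => \sum_(l < n) conv_ZR (A m l) (F l k) t.
Definition matmul_RZ (R : realType) (G : groupType) (n : nat)
  (F : 'I_n -> 'I_n -> G -> R) (A : 'I_n -> 'I_n -> G -> int) :
  'I_n -> 'I_n -> G -> R :=
  fun m k t => \sum_(l < n) conv_RZ (F m l) (A l k) t.

Definition idmat (R : realType) (G : groupType) (n : nat) :
  'I_n -> 'I_n -> G -> R := fun m k t => ((m == k) && (t == monoid.one))%:R.

Definition rowmul_ZR (R : realType) (G : groupType) (n : nat)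
  (h : 'I_n -> G -> int) (F : 'I_n -> 'I_n -> G -> R) : 'I_n -> G -> R :=
  fun m t => \sum_(k < n) conv_ZR (h k) (F k m) t.
Definition rowmul_ZZ (G : groupType) (n : nat)
  (h : 'I_n -> G -> int) (A : 'I_n -> 'I_n -> G -> int) : 'I_n -> G -> int :=
  fun m t => \sum_(k < n) conv_ZZ (h k) (A k m) t.

(* Main.v *)
Require Import Defs.
From HB Require Import structures.
From mathcomp Require Import all_boot all_order all_algebra.
From mathcomp Require Import all_classical all_reals.
From mathcomp Require Import esum.
From mathcomp Require Import ring lra zify.
Import Order.TTheory GRing.Theory Num.Theory.
Local Open Scope classical_set_scope.
Local Open Scope ring_scope.
Set Implicit Arguments. Unset Strict Implicit. Unset Printing Implicit Defensive.

Lemma sumT_seq (V : nmodType) (T : choiceType) (f : T -> V) (A : seq T) :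
  (forall s, s \notin A -> f s = 0) ->
  \sum_(s \in [set: T]) f s = \sum_(s <- undup A) f s.
Proof.
move=> H.
rewrite (fsbig_seq _ _ (undup_uniq A)).
apply/esym/fsbig_widen => // s [_ /=]; rewrite mem_undup => /negP sA.
by rewrite /preimage /= H.
Qed.

Lemma sum_single (V : nmodType) (T : choiceType) (f : T -> V) (A : seq T) u :
  (forall s, s != u -> f s = 0) -> (u \notin A -> f u = 0) ->
  \sum_(s <- undup A) f s = f u.
Proof.
move=> H1 H2.
rewrite -sumT_seq; last first.
  move=> s sA; case: (eqVneq s u) sA => [-> sA|/H1 //]; exact: H2.
rewrite (@sumT_seq _ _ _ [:: u]); last by move=> s; rewrite inE => /H1.
by rewrite /= big_cons big_nil addr0.
Qed.

Lemma inZG_seq (G : groupType) (a : G -> int) : in_ZG a ->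
  exists A : seq G, forall u, u \notin A -> a u = 0.
Proof.
move=> fin; exists (finmap.enum_fset (fset_set (zsupp a))) => u.
rewrite in_fset_set // notin_setE /zsupp /= => /negP.
by rewrite negbK => /eqP.
Qed.

Lemma convZR_E (R : realType) (G : groupType) (a : G -> int) (F : G -> R) t (A : seq G) :
  (forall u, u \notin A -> a u = 0) ->
  conv_ZR a F t = \sum_(u <- undup A) (a u)%:~R * F (u^-1 * t)%g.
Proof.
move=> H; rewrite /conv_ZR (reindex_fsbigT (fun u : G => (u^-1 * t)%g)).
  under eq_fsbigr => u _ do rewrite invgM invgK mulgA mulgV mul1g.
  by rewrite (@sumT_seq _ _ _ A) // => s /H ->; rewrite mul0r.
exists (fun s : G => (t * s^-1)%g) => u /=.
  by rewrite invgM invgK mulgA mulgV mul1g.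
by rewrite invgM invgK -mulgA mulVg mulg1.
Qed.

Lemma convZZ_E (G : groupType) (a b : G -> int) t (A : seq G) :
  (forall u, u \notin A -> a u = 0) ->
  conv_ZZ a b t = \sum_(u <- undup A) a u * b (u^-1 * t)%g.
Proof.
move=> H; rewrite /conv_ZZ (reindex_fsbigT (fun u : G => (u^-1 * t)%g)).
  under eq_fsbigr => u _ do rewrite invgM invgK mulgA mulgV mul1g.
  by rewrite (@sumT_seq _ _ _ A) // => s /H ->; rewrite mul0r.
exists (fun s : G => (t * s^-1)%g) => u /=.
  by rewrite invgM invgK mulgA mulgV mul1g.
by rewrite invgM invgK -mulgA mulVg mulg1.
Qed.

Lemma convRZ_E (R : realType) (G : groupType) (F : G -> R) (a : G -> int) t (A : seq G) :
  (forall u, u \notin A -> a u = 0) ->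
  conv_RZ F a t = \sum_(s <- undup A) F (t * s^-1)%g * (a s)%:~R.
Proof.
by move=> H; rewrite /conv_RZ (@sumT_seq _ _ _ A) // => s /H ->; rewrite mulr0.
Qed.

Lemma l1norm_E (G : groupType) (a : G -> int) (A : seq G) :
  (forall u, u \notin A -> a u = 0) ->
  l1norm_ZG a = \sum_(s <- undup A) `|a s|.
Proof. by move=> H; rewrite /l1norm_ZG (@sumT_seq _ _ _ A) // => s /H ->. Qed.

Lemma fRZ_expand (R : realType) (G : groupType) (n : nat) (M : 'I_n -> nat)
  (g : 'I_n -> 'I_n -> G -> int) (F : 'I_n -> 'I_n -> G -> R) :
  (forall m k, in_ZG (g m k)) -> matmul_RZ F (fmat M g) = @idmat R G n ->
  forall m k t, F m k t * (M k)%:R - \sum_(l < n) conv_RZ (F m l) (g l k) t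
     = ((m == k) && (t == 1%g))%:R.
Proof.
move=> gZ E m k t.
have := congr1 (fun X => X m k t) E; rewrite /matmul_RZ /idmat /= => <-.
have -> : \sum_(l < n) conv_RZ (F m l) (fmat M g l k) t =
   \sum_(l < n) (F m l t * ((l == k)%:R * (M k)%:R) - conv_RZ (F m l) (g l k) t).
  apply: eq_bigr => l _.
  have [A HA] := inZG_seq (gZ l k).
  have HA' : forall u, u \notin (1%g :: A) -> g l k u = 0.
    by move=> u; rewrite inE negb_or => /andP[_ /HA].
  rewrite (convRZ_E _ _ HA') (@convRZ_E _ _ _ _ _ (1%g :: A)); last first.
    move=> u; rewrite inE negb_or => /andP[u1 /HA]; rewrite /fmat /deltaZ.
    by rewrite (negbTE u1) /= mulr0 => ->; rewrite subr0.
  rewrite (eq_bigr (fun s => F m l (t * s^-1)%g * ((l == k)%:R * (M k)%:R * deltaZ s)%:~R - F m l (t * s^-1)%g * (g l k s)%:~R)); last first.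
    by move=> s _; rewrite /fmat rmorphB /= mulrBr.
  rewrite sumrB (@sum_single _ _ (fun s => F m l (t * s^-1)%g * ((l == k)%:R * (M k)%:R * deltaZ s)%:~R) (1%g :: A) 1%g); first last.
    by rewrite inE eqxx.
    by move=> s s1; rewrite /deltaZ (negbTE s1) mulr0 mulr0.
  rewrite /deltaZ eqxx mulr1 invg1 mulg1; congr (_ * _ - _).
  by rewrite rmorphM /= !mulrz_nat.
rewrite sumrB; congr (_ - _).
rewrite (bigD1 k) //= eqxx mul1r big1 ?addr0 // => l /negbTE ->.
by rewrite mul0r mulr0.
Qed.

Module CPart.
From mathcomp Require Import finmap.

Lemma l1_finite (R : realType) (G : groupType) (F : G -> R) (c : R) :
  in_l1 F -> 0 < c -> finite_set [set s | c <= `|F s|].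
Proof.
move=> Fl c0; apply: contrapT => inf.
have Es : (esum [set: G] (fun s => `|(F s)%:E|) < +oo)%E := Fl.
set e := esum _ _ in Es.
have e0 : (0 <= e)%E by apply: esum_ge0 => s _; exact: abse_ge0.
have ef : e \is a fin_num by rewrite fin_numElt Es andbT (lt_le_trans (ltNyr 0)).
set N := Num.Def.trunc (fine e / c).
have [B BA szB] := infinite_set_fset N.+1 inf.
have : (((N.+1)%:R * c)%:E <= e)%E.
  apply: esum_ge; exists [set` B]; first by split => //; exact: finite_fset.
  rewrite -(@fsbig_seq _ _ _ _ (finmap.enum_fset B)) //.
  under eq_bigr do rewrite abse_EFin.
  rewrite sumEFin lee_fin.
  apply: (@le_trans _ _ (\sum_(i <- finmap.enum_fset B) c)).
    rewrite big_const_seq count_predT iter_addr_0 -[c *+ _]mulr_natr [c * _]mulrC.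
    by rewrite ler_pM2r // ler_nat; exact: szB.
  rewrite big_seq [X in _ <= X]big_seq; apply: ler_sum => i iB.
  by have := BA i iB.
rewrite -(fineK ef) lee_fin => H.
have := truncnS_gt (fine e / c); rewrite -/N ltr_pdivrMr // => H2.
by have := lt_le_trans H2 H; rewrite ltxx.
Qed.

Lemma seq_argmax (R : realType) (T : eqType) (phi : T -> R) (L : seq T) x0 :
  x0 \in L -> exists2 x, x \in L & forall y, y \in L -> phi y <= phi x.
Proof.
elim: L x0 => [//|a L IH] x0 _.
case: L IH => [|b L] IH.
  by exists a; rewrite ?inE // => y; rewrite inE => /eqP->.
have [x xL Hx] := IH b (mem_head _ _).
case: (lerP (phi a) (phi x)) => ha.
  exists x; first by rewrite inE xL orbT.
  by move=> y; rewrite inE => /orP[/eqP->|/Hx].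
exists a; first by rewrite inE eqxx.
move=> y; rewrite inE => /orP[/eqP->//|/Hx hy].
exact: le_trans hy (ltW ha).
Qed.

Lemma exists_max (R : realType) (G : groupType) (n : nat) (H : 'I_n -> G -> R)
  (D : set G) : (forall l, in_l1 (H l)) -> forall k0 t0, D t0 -> H k0 t0 != 0 ->
  exists k t, [/\ D t, H k t != 0 & forall l s, D s -> `|H l s| <= `|H k t|].
Proof.
move=> Hl k0 t0 Dt0 H0.
set c := `|H k0 t0|.
have c0 : 0 < c by rewrite normr_gt0.
pose S (l : 'I_n) := finmap.enum_fset (fset_set [set s | c <= `|H l s|]).
have memS l s : (s \in S l) = (c <= `|H l s|).
  rewrite /S in_fset_set; last exact: l1_finite.
  by apply/idP/idP => [/set_mem //|H0']; apply: mem_set.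
pose L := [seq (l, s) | l <- enum 'I_n, s <- S l].
have memL l s : c <= `|H l s| -> (l, s) \in L.
  by move=> hc; apply/allpairsPdep; exists l, s; rewrite mem_enum memS.
pose phi (p : 'I_n * G) := if `[< D p.2 >] then `|H p.1 p.2| else 0.
have [[k t] kL Hmax] := seq_argmax phi (memL k0 t0 (lexx _)).
have phik : c <= phi (k, t).
  by have := Hmax (k0, t0) (memL k0 t0 (lexx _)); rewrite /phi /= asboolT.
have Dt : D t.
  apply: contrapT => nD; move: phik; rewrite /phi /= asboolF //.
  by rewrite leNgt c0.
move: phik; rewrite /phi /= asboolT // => phik.
exists k, t; split => //.
  by rewrite -normr_gt0 (lt_le_trans c0 phik).
move=> l s Ds.
case: (lerP c `|H l s|) => hc.
  by have := Hmax (l, s) (memL l s hc); rewrite /phi /= !asboolT.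
exact: le_trans (ltW hc) phik.
Qed.

End CPart.
Import CPart.

Lemma suppF (R : realType) (G : groupType) (n : nat) (M : 'I_n -> nat)
  (g : 'I_n -> 'I_n -> G -> int) (P : set G) (F : 'I_n -> 'I_n -> G -> R) :
  (forall m k, in_ZG (g m k)) ->
  (forall k, (\sum_(m < n) l1norm_ZG (g m k) < (M k)%:Z)) ->
  (forall x y, P x -> P y -> P (monoid.mul x y)) ->
  (forall m k, zsupp (g m k) `<=` P) ->
  (forall m k, in_l1 (F m k)) ->
  matmul_RZ F (fmat M g) = @idmat R G n ->
  forall m k t, t != 1%g -> ~ P t -> F m k t = 0.
Proof.
move=> gZ Mbig Psg gP Fl Einv m k0 t0 t01 Pt0.
apply/eqP; apply: contraT => H0.
pose D := [set t : G | t != 1%g /\ ~ P t].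
have [k [t [[t1 Pt] Hne Hmax]]] :=
  @exists_max _ _ _ (F m) D (fun l => Fl m l) k0 t0 (conj t01 Pt0) H0.
set d := `|F m k t|.
have d0 : 0 < d by rewrite normr_gt0.
have E := fRZ_expand gZ Einv m k t.
move: E; rewrite (negbTE t1) andbF /= => /eqP; rewrite subr_eq0 => /eqP E.
have bound : `|\sum_(l < n) conv_RZ (F m l) (g l k) t|
    <= d * (\sum_(l < n) l1norm_ZG (g l k))%:~R.
  rewrite rmorph_sum /= mulr_sumr.
  apply: (le_trans (ler_norm_sum _ _ _)); apply: ler_sum => l _.
  have [A HA] := inZG_seq (gZ l k).
  rewrite (convRZ_E _ _ HA) (l1norm_E HA) rmorph_sum /= mulr_sumr.
  apply: (le_trans (ler_norm_sum _ _ _)); apply: ler_sum => s _.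
  case: (eqVneq (g l k s) 0) => [->|gs0].
    by rewrite !mulr0 normr0.
  rewrite normrM intr_norm mulrC [d * _]mulrC; apply: ler_wpM2l => //.
  have Ps : P s by apply: (gP l k).
  apply: Hmax; split.
    apply/negP => /eqP ts1; apply: Pt.
    by rewrite -(mulgVK s t) ts1 mul1g.
  move=> Pts; apply: Pt; rewrite -(mulgVK s t).
  exact: Psg.
have : d * (M k)%:R <= d * (\sum_(l < n) l1norm_ZG (g l k))%:~R.
  by apply: le_trans bound; rewrite -E normrM normr_nat.
rewrite ler_pM2l // leNgt => /negP H; exfalso; apply: H.
by have := Mbig k; rewrite -(ltr_int R).
Qed.

Lemma F_one (R : realType) (G : groupType) (n : nat) (M : 'I_n -> nat)
  (g : 'I_n -> 'I_n -> G -> int) (P : set G) (F : 'I_n -> 'I_n -> G -> R) :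
  (forall m k, in_ZG (g m k)) ->
  (forall k, (0 < M k)%N) ->
  (forall k, (\sum_(m < n) l1norm_ZG (g m k) < (M k)%:Z)) ->
  (forall x y, P x -> P y -> P (monoid.mul x y)) ->
  ~ P monoid.one ->
  (forall m k, zsupp (g m k) `<=` P) ->
  (forall m k, in_l1 (F m k)) ->
  matmul_RZ F (fmat M g) = @idmat R G n ->
  forall m k, F m k 1%g = (m == k)%:R / (M k)%:R.
Proof.
move=> gZ Mpos Mbig Psg P1 gP Fl Einv m k.
have E := fRZ_expand gZ Einv m k 1%g.
rewrite eqxx andbT big1 ?subr0 in E; last first.
  move=> l _; have [A HA] := inZG_seq (gZ l k).
  rewrite (convRZ_E _ _ HA) big1 // => s _.
  case: (eqVneq (g l k s) 0) => [->|gs0]; first by rewrite mulr0.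
  have Ps : P s by apply: (gP l k).
  rewrite mul1g (@suppF _ _ _ _ _ P _ gZ Mbig Psg gP Fl Einv) ?mul0r //.
    by apply/negP => /eqP s1; apply: P1; move: Ps; rewrite -(invgK s) s1 invg1.
  by move=> Ps'; apply: P1; rewrite -(mulgV s); exact: Psg.
rewrite -E mulfK //.
by rewrite pnatr_eq0 -lt0n.
Qed.

Lemma common_cover (I : finType) (G : choiceType) (a : I -> G -> int) :
  (forall i, exists A : seq G, forall u, u \notin A -> a i u = 0) ->
  exists A : seq G, forall i u, u \notin A -> a i u = 0.
Proof.
move=> H; have [f Hf] := boolp.choice H.
exists (flatten [seq f i | i <- enum I]) => i u uA; apply: Hf.
apply: contra uA => uf; apply/flattenP; exists (f i) => //.
by apply/mapP; exists i; rewrite ?mem_enum.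
Qed.

Lemma convZR_shift (R : realType) (G : groupType) (a : G -> int) (F : G -> R) (t v : G) :
  conv_ZR a F (v^-1 * t)%g =
  \sum_(w \in [set: G]) (a (v^-1 * w)%g)%:~R * F (w^-1 * t)%g.
Proof.
rewrite /conv_ZR (reindex_fsbigT (fun w : G => (w^-1 * t)%g)).
  by apply: eq_fsbigr => w _; rewrite invgM invgK -!mulgA [(t * _)%g]mulgA mulgV mul1g.
exists (fun s : G => (t * s^-1)%g) => u /=.
  by rewrite invgM invgK mulgA mulgV mul1g.
by rewrite invgM invgK -mulgA mulVg mulg1.
Qed.

Lemma rowmulZZ_cover (G : groupType) (n : nat)
  (r : 'I_n -> G -> int) (a : 'I_n -> 'I_n -> G -> int) (V SA : seq G) :
  (forall l u, u \notin V -> r l u = 0) ->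
  (forall l k u, u \notin SA -> a l k u = 0) ->
  forall k w, w \notin [seq (v * u)%g | v <- V, u <- SA] -> rowmul_ZZ r a k w = 0.
Proof.
move=> HV HA k w wW; rewrite /rowmul_ZZ big1 // => l _.
rewrite (convZZ_E _ _ (HV l)) big1_seq // => v /andP[_]; rewrite mem_undup => vV.
case: (eqVneq (a l k (v^-1 * w)%g) 0) => [->|a0]; first by rewrite mulr0.
exfalso; move/negP: wW; apply; apply/allpairsP; exists (v, (v^-1 * w)%g) => /=.
split => //; first by apply: contraR a0 => /HA ->.
by rewrite mulVKg.
Qed.

Lemma convZR_B (R : realType) (G : groupType) (a b : G -> int) (F : G -> R) t (A B : seq G) :
  (forall u, u \notin A -> a u = 0) -> (forall u, u \notin B -> b u = 0) ->
  conv_ZR (fun s => a s - b s) F t = conv_ZR a F t - conv_ZR b F t.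
Proof.
move=> HA HB.
have HA' : forall u, u \notin A ++ B -> a u = 0.
  by move=> u; rewrite mem_cat negb_or => /andP[/HA ->].
have HB' : forall u, u \notin A ++ B -> b u = 0.
  by move=> u; rewrite mem_cat negb_or => /andP[_ /HB ->].
have HAB : forall u, u \notin A ++ B -> a u - b u = 0.
  by move=> u uAB; rewrite (HA' _ uAB) (HB' _ uAB) subr0.
rewrite (convZR_E _ _ HAB) (convZR_E _ _ HA') (convZR_E _ _ HB') -sumrB.
by apply: eq_bigr => s _; rewrite rmorphB /= mulrBl.
Qed.

Lemma rowmul_assoc (R : realType) (G : groupType) (n : nat)
  (r : 'I_n -> G -> int) (a : 'I_n -> 'I_n -> G -> int) (F : 'I_n -> 'I_n -> G -> R)
  (V SA : seq G) :
  (forall l u, u \notin V -> r l u = 0) ->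
  (forall l k u, u \notin SA -> a l k u = 0) ->
  matmul_ZR a F = @idmat R G n ->
  forall m t, rowmul_ZR (rowmul_ZZ r a) F m t = (r m t)%:~R.
Proof.
move=> HV HA E m t.
pose W := [seq (v * u)%g | v <- V, u <- SA].
have HW : forall k w, w \notin W -> rowmul_ZZ r a k w = 0.
  move=> k w wW; rewrite /rowmul_ZZ big1 // => l _.
  rewrite (convZZ_E _ _ (HV l)) big1_seq // => v /andP[_]; rewrite mem_undup => vV.
  case: (eqVneq (a l k (v^-1 * w)%g) 0) => [->|a0]; first by rewrite mulr0.
  exfalso; move/negP: wW; apply; apply/allpairsP; exists (v, (v^-1 * w)%g) => /=.
  split => //; first by apply: contraR a0 => /HA ->.
  by rewrite mulVKg.
rewrite /rowmul_ZR.
have step1 : forall k, conv_ZR (rowmul_ZZ r a k) (F k m) t =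
   \sum_(l < n) \sum_(v <- undup V) (r l v)%:~R *
      \sum_(w <- undup W) (a l k (v^-1 * w)%g)%:~R * F k m (w^-1 * t)%g.
  move=> k; rewrite (convZR_E _ _ (HW k)).
  under eq_bigr => w _ do rewrite /rowmul_ZZ rmorph_sum /= mulr_suml.
  rewrite exchange_big /=; apply: eq_bigr => l _.
  under eq_bigr => w _ do rewrite (convZZ_E _ _ (HV l)) rmorph_sum /= mulr_suml.
  rewrite exchange_big /=; apply: eq_bigr => v _.
  rewrite mulr_sumr; apply: eq_bigr => w _.
  by rewrite rmorphM /= mulrA.
under eq_bigr => k _ do rewrite step1.
rewrite exchange_big /=.
under eq_bigr => l _ do rewrite exchange_big /=.
have step2 : forall l v, v \in undup V ->
   \sum_(k < n) (r l v)%:~R *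
      \sum_(w <- undup W) (a l k (v^-1 * w)%g)%:~R * F k m (w^-1 * t)%g
   = (r l v)%:~R * ((l == m) && ((v^-1 * t)%g == 1%g))%:R.
  move=> l v; rewrite mem_undup => vV.
  rewrite -mulr_sumr; congr (_ * _).
  have := congr1 (fun X => X l m (v^-1 * t)%g) E; rewrite /matmul_ZR /idmat /= => <-.
  apply: eq_bigr => k _; rewrite convZR_shift (@sumT_seq _ _ _ W) //.
  move=> w wW; case: (eqVneq (a l k (v^-1 * w)%g) 0) => [->|a0]; first by rewrite mul0r.
  exfalso; move/negP: wW; apply; apply/allpairsP; exists (v, (v^-1 * w)%g) => /=.
  split => //; first by apply: contraR a0 => /HA ->.
  by rewrite mulVKg.
under eq_bigr => l _ do rewrite big_seq (eq_bigr _ (step2 l)) -big_seq.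
rewrite (bigD1 m) //= [X in _ + X]big1 ?addr0; last first.
  move=> l lm; rewrite big1 // => v _.
  by rewrite (negbTE lm) /= mulr0.
rewrite eqxx /=.
rewrite (@sum_single _ _ _ V t).
- by rewrite mulVg eqxx mulr1.
- by move=> v vt; rewrite -(inj_eq (mulgI v)) mulg1 mulVKg eq_sym (negbTE vt) mulr0.
- by move=> /HV ->; rewrite mul0r.
Qed.

Lemma round_cover (R : realType) (G : groupType) (n : nat) (h : 'I_n -> G -> int)
  (F : 'I_n -> 'I_n -> G -> R) (Sh : seq G) :
  (forall k u, u \notin Sh -> h k u = 0) -> (forall m k, in_l1 (F m k)) ->
  forall m, exists V : seq G, forall t, t \notin V ->
    Num.floor (rowmul_ZR h F m t + 2^-1) = 0.
Proof.
move=> HSh Fl m.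
set H := \sum_(k < n) \sum_(w <- undup Sh) `|(h k w)%:~R : R|.
have H0 : 0 <= H by apply: sumr_ge0 => k _; apply: sumr_ge0 => w _.
set e : R := (2 * (H + 1))^-1.
have e0 : 0 < e by rewrite invr_gt0 mulr_gt0 // ltr_wpDl.
pose S k := finmap.enum_fset (fset_set [set s | e <= `|F k m s|]).
have memS k s : (s \in S k) = (e <= `|F k m s|).
  rewrite /S in_fset_set; last exact: l1_finite.
  by apply/idP/idP => [/set_mem //|H0']; apply: mem_set.
exists (flatten [seq [seq (w * s)%g | w <- Sh, s <- S k] | k <- enum 'I_n]) => t tV.
have small : forall k w, w \in Sh -> `|F k m (w^-1 * t)%g| < e.
  move=> k w wSh; rewrite ltNge; apply/negP => he; move/negP: tV; apply.
  apply/flattenP; exists [seq (w * s)%g | w <- Sh, s <- S k].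
    by apply/mapP; exists k; rewrite ?mem_enum.
  by apply/allpairsP; exists (w, (w^-1 * t)%g); rewrite /= memS mulVKg.
have xb : `|rowmul_ZR h F m t| < 2^-1.
  rewrite /rowmul_ZR; apply: (le_lt_trans (ler_norm_sum _ _ _)).
  apply: (@le_lt_trans _ _ (H * e)).
    rewrite /H mulr_suml; apply: ler_sum => k _.
    rewrite (convZR_E _ _ (HSh k)) mulr_suml.
    apply: (le_trans (ler_norm_sum _ _ _)).
    rewrite big_seq [X in _ <= X]big_seq; apply: ler_sum => w; rewrite mem_undup => wSh.
    rewrite normrM ler_wpM2l //; exact: ltW (small k w wSh).
  have H1 : H + 1 != 0 by rewrite gt_eqF // ltr_wpDl.
  apply: (@lt_le_trans _ _ ((H + 1) * e)).
    by rewrite ltr_pM2r // ltrDl ltr01.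
  by rewrite /e invfM mulrCA mulfV ?mulr1.
apply/eqP; rewrite floor_eq add0r /=.
move: xb; rewrite ltr_norml => /andP[xl xr].
rewrite /= ?mulr0z ?mulr1z.
by apply/andP; split; lra.
Qed.

Lemma count_lt (T : eqType) (a b : pred T) (s : seq T) x :
  subpred a b -> x \in s -> b x -> ~~ a x -> (count a s < count b s)%N.
Proof.
move=> ab; elim: s => // y s IH; rewrite inE => /orP[/eqP <-|xs] bx nax /=.
  by rewrite (negbTE nax) bx add0n add1n ltnS sub_count.
rewrite -addnS leq_add //; last exact: IH.
by case: (boolP (a y)) => // /ab ->.
Qed.

Lemma exists_minimal (G : groupType) (P : set G) (S : G -> Prop) (L : seq G) :
  (forall x y, P x -> P y -> P (monoid.mul x y)) -> ~ P monoid.one ->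
  (forall u, S u -> u \in L) -> forall u0, S u0 ->
  exists u, S u /\ forall w, S w -> ~ P (w^-1 * u)%g.
Proof.
move=> Psg P1 SL u0 Su0.
pose N u := count (fun w => `[< S w /\ P (w^-1 * u)%g >]) L.
suff: forall k u, (N u < k)%N -> S u -> exists u, S u /\ forall w, S w -> ~ P (w^-1 * u)%g.
  by move=> Hk; apply: (Hk (N u0).+1 u0).

elim => [//|k IH] u Nu Su.
case: (pselect (exists w, S w /\ P (w^-1 * u)%g)) => [[w [Sw Pw]]|none]; last first.
  by exists u; split => // w Sw Pw; apply: none; exists w.
apply: (IH w) => //.
rewrite ltnS in Nu; apply: (leq_trans _ Nu).
apply: (@count_lt _ _ _ _ w).
- move=> v /asboolP [Sv Pv]; apply/asboolP; split => //.
  by have := Psg _ _ Pv Pw; rewrite -mulgA mulVKg.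
- exact: SL.
- exact/asboolP.
- by apply/asboolP => -[_]; rewrite mulVg.
Qed.

Lemma eval_minimal (R : realType) (G : groupType) (n : nat) (M : 'I_n -> nat)
  (g : 'I_n -> 'I_n -> G -> int) (P : set G) (F : 'I_n -> 'I_n -> G -> R)
  (h' : 'I_n -> G -> int) (S' : seq G) (u : G) :
  (forall m k, in_ZG (g m k)) ->
  (forall k, (0 < M k)%N) ->
  (forall k, (\sum_(m < n) l1norm_ZG (g m k) < (M k)%:Z)) ->
  (forall x y, P x -> P y -> P (monoid.mul x y)) ->
  ~ P monoid.one ->
  (forall m k, zsupp (g m k) `<=` P) ->
  (forall m k, in_l1 (F m k)) ->
  matmul_RZ F (fmat M g) = @idmat R G n ->
  (forall k w, w \notin S' -> h' k w = 0) ->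
  (forall w, (exists k, h' k w != 0) -> ~ P (w^-1 * u)%g) ->
  forall m, rowmul_ZR h' F m u = (h' m u)%:~R / (M m)%:R.
Proof.
move=> gZ Mpos Mbig Psg P1 gP Fl Einv HS' minu m.
have inner : forall k, conv_ZR (h' k) (F k m) u = (h' k u)%:~R * F k m 1%g.
  move=> k; rewrite (convZR_E _ _ (HS' k)) (@sum_single _ _ _ S' u) ?mulVg //.
    move=> w wu; case: (eqVneq (h' k w) 0) => [->|hw]; first by rewrite mul0r.
    rewrite (@suppF _ _ _ _ _ P _ gZ Mbig Psg gP Fl Einv) ?mulr0 //.
      apply/negP => /eqP e1; move/negP: wu; apply; apply/eqP.
      by rewrite -(mulVKg w u) e1 mulg1.
    by apply: minu; exists k.
  by move=> /HS' ->; rewrite mul0r.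
rewrite /rowmul_ZR; under eq_bigr => k _ do rewrite inner.
rewrite (bigD1 m) //= big1 ?addr0.
  by rewrite (F_one gZ Mpos Mbig Psg P1 gP Fl Einv) eqxx mulrA mulr1.
move=> k km; rewrite (F_one gZ Mpos Mbig Psg P1 gP Fl Einv) (negbTE km).
by rewrite mul0r mulr0.
Qed.

Unset Implicit Arguments.

Theorem lemma5p3 (R : realType) (G : groupType)
  (Gcount : countable [set: G]) (Ginf : infinite_set [set: G])
  (n : nat) (M : 'I_n -> nat) (g : 'I_n -> 'I_n -> G -> int)
  (P : set G) (h : 'I_n -> G -> int) (Finv : 'I_n -> 'I_n -> G -> R) :
  (forall m k, in_ZG (g m k)) ->
  (forall k, (0 < M k)%N) ->
  (forall k, (\sum_(m < n) l1norm_ZG (g m k) < (M k)%:Z)) ->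
  (forall x y, P x -> P y -> P (monoid.mul x y)) ->
  ~ P monoid.one ->
  (forall m k, zsupp (g m k) `<=` P) ->
  (forall k, in_ZG (h k)) ->
  ~ (exists a : 'I_n -> G -> int, (forall k, in_ZG (a k)) /\
       h = rowmul_ZZ a (fmat M g)) ->
  (* Finv is the inverse f^{-1} of f in M_n(l^1_R(Gamma)) *)
  (forall m k, in_l1 (Finv m k)) ->
  matmul_ZR (fmat M g) Finv = @idmat R G n ->
  matmul_RZ Finv (fmat M g) = @idmat R G n ->
  exists (s : G) (k : 'I_n) (j : nat),
    [/\ (1 <= j)%N, (j <= (M k).-1)%N &
        exists z : int,
          rowmul_ZR h Finv k s - j%:R / (M k)%:R = z%:~R].
Proof.
move=> gZ Mpos Mbig Psg P1 gP hZ hnot Fl E1 E2.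
have [Sh HSh] := @common_cover _ _ h (fun k => inZG_seq (hZ k)).
have [Sf HSf] : exists Sf : seq G, forall l k u, u \notin Sf -> fmat M g l k u = 0.
  have [Sg HSg] := @common_cover _ _ (fun p : 'I_n * 'I_n => g p.1 p.2)
    (fun p => inZG_seq (gZ p.1 p.2)).
  exists (1%g :: Sg) => l k u; rewrite inE negb_or => /andP[u1 uS].
  by rewrite /fmat /deltaZ (negbTE u1) mulr0 (HSg (l, k) u uS) subr0.
set x := rowmul_ZR h Finv.
pose r m t := Num.floor (x m t + 2^-1).
have [V HV] : exists V : seq G, forall l u, u \notin V -> r l u = 0.
  by apply: common_cover => l; exact: round_cover HSh Fl l.
have HW := rowmulZZ_cover HV HSf.
set W := [seq (v * u)%g | v <- V, u <- Sf] in HW.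
pose h' k t := h k t - rowmul_ZZ r (fmat M g) k t.
have HS' : forall k w, w \notin Sh ++ W -> h' k w = 0.
  move=> k w; rewrite mem_cat negb_or => /andP[hS wW].
  by rewrite /h' (HSh k w hS) (HW k w wW) subr0.
have Hx' : forall m t, rowmul_ZR h' Finv m t = x m t - (r m t)%:~R.
  move=> m t; rewrite /rowmul_ZR /x /rowmul_ZR.
  under eq_bigr => k _ do rewrite (convZR_B _ _ (HSh k) (HW k)).
  rewrite sumrB; congr (_ - _).
  exact: (rowmul_assoc HV HSf E1).
case: (pselect (exists m u, h' m u != 0)) => [[m0 [u0 hu0]]|allz]; last first.
  exfalso; apply: hnot; exists r; split.
    move=> k; apply: (sub_finite_set _ (finite_seq V)) => u /=.
    rewrite /zsupp /= => ru; apply: contraT => uV.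
    by rewrite (HV k u uV) eqxx in ru.
  apply/funext => k; apply/funext => t; apply/eqP; rewrite -subr_eq0.
  apply: contraT => H; exfalso; apply: allz; exists k, t.
  by rewrite /h'.
have [u [[m hmu] minu]] := @exists_minimal _ P (fun w => exists m, h' m w != 0)
  (Sh ++ W) Psg P1 (fun w '(ex_intro m hm) => contraR (fun wn => (introT eqP (HS' m w wn))) hm) u0 (ex_intro _ m0 hu0).
have ev := eval_minimal gZ Mpos Mbig Psg P1 gP Fl E2 HS' minu m.
rewrite Hx' in ev.
set q := h' m u in hmu ev.
have M0 : (0 < (M m)%:Z) by rewrite ltz_nat.
have MR0 : (0 : R) < (M m)%:R by rewrite ltr0n.
have fl := floor_itv (x m u + 2^-1).
have qb1 : (- (M m)%:Z < q) && (q < (M m)%:Z).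
  rewrite -(ltr_int R) -(ltr_int R) /= rmorphN /=.
  have eq1 : (q%:~R : R) = (x m u - (r m u)%:~R) * (M m)%:R.
    by rewrite ev mulfVK // gt_eqF.
  rewrite eq1 -/(r m u) in fl *.
  move: fl; rewrite rmorphD /= => /andP[f1 f2].
  set y := x m u in f1 f2 *; set c := (r m u)%:~R in f1 f2 *.
  set MM := (M m)%:R in MR0 *.
  apply/andP; split; nra.
have [d [j' [qE [j'0 j'M]]]] : exists d j' : int,
    [/\ q = d * (M m)%:Z + j', 0 <= j' & j' < (M m)%:Z].
  exists (q %/ (M m)%:Z)%Z, (q %% (M m)%:Z)%Z; split.
  - exact: divz_eq.
  - by rewrite modz_ge0 // gt_eqF.
  - by rewrite ltz_pmod.
exists u, m, `|j'|%N; split.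
- rewrite lt0n; apply/negP => /eqP /eqP; rewrite absz_eq0 => /eqP j0.
  move/andP: qb1 => [qb1 qb2].
  have d0 : d = 0 by rewrite j0 addr0 in qE; nia.
  by move: hmu; rewrite qE d0 j0 mul0r addr0 eqxx.
- by rewrite -ltnS prednK // -ltz_nat abszE ger0_norm.
- exists (r m u + d).
  have jR : ((`|j'|%N)%:R : R) = j'%:~R by rewrite natr_absz ger0_norm.
  have qR : (q%:~R : R) = d%:~R * (M m)%:R + j'%:~R by rewrite qE rmorphD rmorphM.
  have xE : x m u = (r m u)%:~R + q%:~R / (M m)%:R by rewrite -ev addrC subrK.
  rewrite jR rmorphD xE qR.
  by field; rewrite pnatr_eq0 -lt0n.
Qed.
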